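(* If $\mathbf{H}=(H,\le,\wedge,\vee,0,1,\to)$ is a Heyting algebra, then its canonical frame $(X,\perp,Y,T)$ is a Heyting frame.
   Context: The canonical frame of $\mathbf H$: $X$ is the set of filters of $\mathbf H$, $Y$ the set of ideals, $x\perp y$ iff $x\cap y\neq\emptyset$; for $x\in X,v\in Y$, $x\leadsto v$ is the ideal generated by $\{a\to b:a\in x,b\in v\}$, and $yTxv$ iff $x\leadsto v\subseteq y$. General notions: $U'=\{y:\forall x\in U\ x\perp y\}$ for $U\subseteq X$, ${}'V=\{x:\forall y\in V\ x\perp y\}$ for $V\subseteq Y$; $A\subseteq X$ is stable if $A={}'(A')$, $B\subseteq Y$ co-stable if $B=({}'B)'$. Preorders: $x\le z$ iff $\{x\}'\subseteq\{z\}'$; $y\le v$ iff ${}'\{y\}\subseteq{}'\{v\}$; separated means both are partial orders; $\Gamma u$ is the set of elements above $u$. $T'\subseteq X\times X\times Y$: $uT'xv$ iff $\forall y(yTxv\Rightarrow u\perp y)$. An implicative frame is $(X,\perp,Y,T)$ with: (F0) $x\perp y$ iff $uT'xy$ for all $u\in X$; (F1) separated; (F2) each $\{y:yTxv\}$ equals $\Gamma w$ for some $w\in Y$; (F3) if $yTxv$, $x_1\le x$, $v_1\le v$ then $yTx_1v_1$; (F4) for all $u,x\in X,v\in Y$, $\{x_1:uT'x_1v\}$ is stable and $\{v_1:uT'xv_1\}$ is co-stable. Derived relations: $vR^{\partial11}zx$ iff $xT'zv$; $uR^{111}zx$ iff $\forall v\in Y(vR^{\partial11}zx\Rightarrow u\perp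 v)$. Upper bound relation: $uR_\le xz$ iff $x\le u$ and $z\le u$. A Heyting frame is an implicative frame with $\{u:uR^{111}xz\}=\{u:uR_\le xz\}$ for all $x,z\in X$. *)

(* Defs.v *)
From mathcomp Require Import all_boot all_order.
Set Implicit Arguments. Unset Strict Implicit. Unset Printing Implicit Defensive.
Import Order.TTheory.
Local Open Scope order_scope.

Definition heyting_imp d (L : tbLatticeType d) (imp : L -> L -> L) : Prop :=
  forall a b c : L, (a `&` b <= c) = (a <= imp b c).

(** * Generic frame notions, for (X, perp, Y, T) with [T y x v] meaning yTxv. *)
Section Frames.
Variables (X Y : Type) (perp : X -> Y -> Prop) (T : Y -> X -> Y -> Prop).

Definition primeX (U : X -> Prop) : Y -> Prop := fun y => forall x, U x -> perp x y.
Definition primeY (V : Y -> Prop) : X -> Prop := fun x => forall y, V y -> perp x y.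

Definition stable (A : X -> Prop) : Prop := forall x, A x <-> primeY (primeX A) x.
Definition costable (B : Y -> Prop) : Prop := forall y, B y <-> primeX (primeY B) y.

Definition leX (x z : X) : Prop := forall y, perp x y -> perp z y.
Definition leY (y v : Y) : Prop := forall x, perp x y -> perp x v.

Definition separated : Prop :=
  (forall x z, leX x z -> leX z x -> x = z) /\
  (forall y v, leY y v -> leY v y -> y = v).

Definition GammaY (w : Y) : Y -> Prop := fun y => leY w y.

Definition Tprime (u x : X) (v : Y) : Prop := forall y, T y x v -> perp u y.

Definition implicative_frame : Prop :=
  (forall x y, perp x y <-> (forall u, Tprime u x y)) /\
  separated /\
  (forall x v, exists w, forall y, T y x v <-> GammaY w y) /\
  (forall y x v x1 v1, T y x v -> leX x1 x -> leY v1 v -> T y x1 v1) /\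
  (forall u x v, stable (fun x1 => Tprime u x1 v) /\
                          costable (fun v1 => Tprime u x v1)).

Definition Rd11 (v : Y) (z x : X) : Prop := Tprime x z v.
Definition R111 (u z x : X) : Prop := forall v, Rd11 v z x -> perp u v.
Definition Rle (u x z : X) : Prop := leX x u /\ leX z u.

Definition heyting_frame : Prop :=
  implicative_frame /\ (forall x z u, R111 u x z <-> Rle u x z).
End Frames.

Section Canonical.
Variables (d : Order.disp_t) (L : tbLatticeType d) (imp : L -> L -> L).

Definition is_filter (x : L -> Prop) : Prop :=
  x \top /\ (forall a b, x a -> a <= b -> x b) /\ (forall a b, x a -> x b -> x (a `&` b)).
Definition is_ideal (y : L -> Prop) : Prop :=
  y \bot /\ (forall a b, y b -> a <= b -> y a) /\ (forall a b, y a -> y b -> y (a `|` b)).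

Definition filters := {x : L -> Prop | is_filter x}.
Definition ideals := {y : L -> Prop | is_ideal y}.

Definition cperp (x : filters) (y : ideals) : Prop :=
  exists a, proj1_sig x a /\ proj1_sig y a.

Definition gen_ideal (S : L -> Prop) : L -> Prop :=
  fun a => forall I, is_ideal I -> (forall b, S b -> I b) -> I a.

Definition leadsto (x : filters) (v : ideals) : L -> Prop :=
  gen_ideal (fun c => exists a b, proj1_sig x a /\ proj1_sig v b /\ c = imp a b).

Definition cT (y : ideals) (x : filters) (v : ideals) : Prop :=
  forall a, leadsto x v a -> proj1_sig y a.
End Canonical.

(* Main.v *)
Require Import Defs.
From mathcomp Require Import all_boot all_order.
From Stdlib Require Import FunctionalExtensionality PropExtensionality ProofIrrelevance.
Set Implicit Arguments. Unset Strict Implicit.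
Import Order.TTheory.
Local Open Scope order_scope.

Section Helpers.
Variables (d : Order.disp_t) (L : tbLatticeType d) (imp : L -> L -> L).
Hypothesis Himp : heyting_imp imp.

Lemma imp_anti (a a' b b' : L) : a' <= a -> b <= b' -> imp a b <= imp a' b'.
Proof.
move=> ha hb; rewrite -Himp.
have h : imp a b `&` a <= b by rewrite Himp.
apply: le_trans (le_trans h hb); exact: leI2.
Qed.

Lemma imp_swap (a b c : L) : (c <= imp a b) = (a <= imp c b).
Proof. by rewrite -!Himp meetC. Qed.

Lemma gen_ideal_ideal (S : L -> Prop) : is_ideal (gen_ideal S).
Proof.
split; [|split].
- by move=> I [? _] _.
- move=> a b hb hab I HI HS; case: (HI) => _ [hd _]; exact: hd (hb I HI HS) hab.
- move=> a b ha hb I HI HS; case: (HI) => _ [_ hj]; exact: hj _ _ (ha I HI HS) (hb I HI HS).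
Qed.

Definition LT (x : filters L) (v : ideals L) : ideals L :=
  exist _ (leadsto imp x v) (gen_ideal_ideal _).

Lemma leadstoE (x : filters L) (v : ideals L) c :
  leadsto imp x v c <-> exists a b, proj1_sig x a /\ proj1_sig v b /\ c <= imp a b.
Proof.
case: x => x [xT [xu xm]]; case: v => v [vB [vd vj]] /=.
split.
- move=> h; apply: (h (fun c => exists a b, x a /\ v b /\ c <= imp a b)); clear h.
  + split; [|split].
    * exists \top, \bot; do 2!split => //; exact: le0x.
    * move=> a b [a1 [b1 [h1 [h2 h3]]]] hab; exists a1, b1; do 2!split => //.
      exact: le_trans hab h3.
    * move=> a b [a1 [b1 [h1 [h2 h3]]]] [a2 [b2 [h1' [h2' h3']]]].
      exists (a1 `&` a2), (b1 `|` b2); split; [exact: xm|split; [exact: vj|]].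
      rewrite leUx; apply/andP; split.
      -- apply: le_trans h3 _; apply: imp_anti; [exact: leIl|exact: leUl].
      -- apply: le_trans h3' _; apply: imp_anti; [exact: leIr|exact: leUr].
  + move=> b [a1 [b1 [h1 [h2 ->]]]]; exists a1, b1; do 2!split => //.
- move=> [a [b [ha [hb hc]]]] I HI HS; case: (HI) => _ [hd _].
  apply: hd hc; apply: HS; by exists a, b.
Qed.

Lemma TprimeE (u x : filters L) (v : ideals L) :
  Tprime (@cperp d L) (@cT d L imp) u x v <->
  exists c a b, proj1_sig u c /\ proj1_sig x a /\ proj1_sig v b /\ c <= imp a b.
Proof.
split.
- move=> h; have [c [hu hl]] := h (LT x v) (fun a h => h).
  move: hl => /= /leadstoE [a [b [ha [hb hc]]]]; by exists c, a, b.
- move=> [c [a [b [hu [ha [hb hc]]]]]] y hy; exists c; split => //.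
  apply: hy; apply/leadstoE; by exists a, b.
Qed.

Definition downI (a : L) : ideals L.
Proof.
exists (fun b => b <= a); split; [exact: le0x|split].
- move=> x y hy hxy; exact: le_trans hxy hy.
- move=> x y hx hy; by rewrite leUx hx hy.
Defined.

Definition upF (a : L) : filters L.
Proof.
exists (fun b => a <= b); split; [exact: lex1|split].
- move=> x y hy hxy; exact: le_trans hy hxy.
- move=> x y hx hy; by rewrite lexI hx hy.
Defined.

Lemma leX_sub (x z : filters L) :
  leX (@cperp d L) x z <-> forall a, proj1_sig x a -> proj1_sig z a.
Proof.
split.
- move=> h a ha; have [b [hz hb]] := h (downI a) (ex_intro _ a (conj ha (lexx a))).
  case: z hz {h} => z [_ [zu _]] /= hz; exact: zu hz hb.
- move=> h y [a [ha hy]]; exists a; split => //; exact: h.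
Qed.

Lemma leY_sub (y v : ideals L) :
  leY (@cperp d L) y v <-> forall a, proj1_sig y a -> proj1_sig v a.
Proof.
split.
- move=> h a ha; have [b [hz hb]] := h (upF a) (ex_intro _ a (conj (lexx a) ha)).
  case: v hb {h} => v [_ [vd _]] /= hb; exact: vd hb hz.
- move=> h x [a [ha hy]]; exists a; split => //; exact: h.
Qed.

Definition jf (p q : filters L) : filters L.
Proof.
exists (fun b => exists c a, proj1_sig p c /\ proj1_sig q a /\ c <= imp a b).
case: p => p [pT [pu pm]]; case: q => q [qT [qu qm]] /=.
split; [|split].
- exists \top, \top; do 2!split => //; by rewrite -Himp lex1.
- move=> a b [c [a1 [h1 [h2 h3]]]] hab; exists c, a1; do 2!split => //.
  apply: le_trans h3 _; exact: imp_anti.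
- move=> a b [c [a1 [h1 [h2 h3]]]] [c' [a1' [h1' [h2' h3']]]].
  exists (c `&` c'), (a1 `&` a1'); split; [exact: pm|split; [exact: qm|]].
  rewrite -Himp lexI; apply/andP; split.
  + rewrite -Himp in h3; apply: le_trans h3; apply: leI2; exact: leIl.
  + rewrite -Himp in h3'; apply: le_trans h3'; apply: leI2; exact: leIr.
Defined.

Definition jy (p : filters L) (q : ideals L) : ideals L.
Proof.
exists (fun a => exists c b, proj1_sig p c /\ proj1_sig q b /\ a <= imp c b).
case: p => p [pT [pu pm]]; case: q => q [qB [qd qj]] /=.
split; [|split].
- exists \top, \bot; do 2!split => //; exact: le0x.
- move=> a b [c [b1 [h1 [h2 h3]]]] hab; exists c, b1; do 2!split => //.
  exact: le_trans hab h3.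
- move=> a b [c [b1 [h1 [h2 h3]]]] [c' [b1' [h1' [h2' h3']]]].
  exists (c `&` c'), (b1 `|` b1'); split; [exact: pm|split; [exact: qj|]].
  rewrite leUx; apply/andP; split.
  + apply: le_trans h3 _; apply: imp_anti; [exact: leIl|exact: leUl].
  + apply: le_trans h3' _; apply: imp_anti; [exact: leIr|exact: leUr].
Defined.

Lemma Tprime_jf (u x : filters L) (v : ideals L) :
  Tprime (@cperp d L) (@cT d L imp) u x v <-> cperp (jf u x) v.
Proof.
rewrite TprimeE; split.
- move=> [c [a [b [hu [ha [hb hc]]]]]]; exists b; split => //; by exists c, a.
- move=> [b [[c [a [hu [ha hc]]]] hb]]; by exists c, a, b.
Qed.

Lemma Tprime_jy (u x : filters L) (v : ideals L) :
  Tprime (@cperp d L) (@cT d L imp) u x v <-> cperp x (jy u v).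
Proof.
rewrite TprimeE; split.
- move=> [c [a [b [hu [ha [hb hc]]]]]]; exists a; split => //; exists c, b.
  by rewrite -imp_swap.
- move=> [a [ha [c [b [hu [hb hc]]]]]]; exists c, a, b; by rewrite imp_swap.
Qed.

End Helpers.

Theorem proposition4p5 (d : Order.disp_t) (L : tbLatticeType d)
    (imp : L -> L -> L) (Himp : heyting_imp imp) :
  heyting_frame (@cperp d L) (@cT d L imp).
Proof.
split; [split; [|split; [|split; [|split]]]|].
-
  move=> x y; split.
  + move=> [a [ha hy]] u; apply/(TprimeE Himp).
    have uT : proj1_sig u \top by case: (u) => ? [].
    exists \top, a, a; do 3!split => //.
    by rewrite -Himp leIr.
  + move=> h; have /(TprimeE Himp) [c [a [b [hu [ha [hb hc]]]]]] := h (upF \top).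
    move: hu => /= hu.
    have hab : a <= b.
      rewrite -Himp in hc; apply: le_trans hc; rewrite lexI lexx andbT.
      exact: le_trans (lex1 _) hu.
    have [_ [xu _]] := proj2_sig x.
    exists b; split => //; exact: xu ha hab.
-
  split.
  + move=> [x hx] [z hz] h1 h2.
    move/leX_sub: h1 => /= h1; move/leX_sub: h2 => /= h2.
    have E : x = z.
      apply: functional_extensionality => a; apply: propositional_extensionality.
      by split; [apply: h1|apply: h2].
    subst z; f_equal; apply: proof_irrelevance.
  + move=> [x hx] [z hz] h1 h2.
    move/leY_sub: h1 => /= h1; move/leY_sub: h2 => /= h2.
    have E : x = z.
      apply: functional_extensionality => a; apply: propositional_extensionality.
      by split; [apply: h1|apply: h2].
    subst z; f_equal; apply: proof_irrelevance.
-
  move=> x v; exists (LT imp x v) => y; rewrite /GammaY leY_sub //.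
-
  move=> y x v x1 v1 hT hx hv a /(leadstoE Himp) [a1 [b1 [h1 [h2 h3]]]].
  apply: hT; apply/(leadstoE Himp); exists a1, b1; split.
  + exact: (proj1 (leX_sub x1 x) hx).
  + split => //; exact: (proj1 (leY_sub v1 v) hv).
-
  move=> u x v; split.
  + move=> x1; split.
    * move=> h y hy; exact: hy.
    * move=> h; apply/(Tprime_jy Himp); apply: h => x' /(Tprime_jy Himp) //.
  + move=> v1; split.
    * move=> h x' hx'; exact: hx'.
    * move=> h; apply/(Tprime_jf Himp).
      have [b [hb hv]] := h (jf Himp u x) (fun v' hv' => proj1 (Tprime_jf Himp u x v') hv').
      by exists b.
-
  move=> x z u; rewrite /R111 /Rd11 /Rle; split.
  + move=> h.
    have hF : forall a, proj1_sig (jf Himp z x) a -> proj1_sig u a.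
      apply/leX_sub => v hv; apply: h; exact/(Tprime_jf Himp).
    split; apply/leX_sub => a ha; apply: hF.
    * have zT : proj1_sig z \top by case: (z) => ? [].
    exists \top, a; do 2!split => //.
      by rewrite -Himp leIr.
    * have xT : proj1_sig x \top by case: (x) => ? [].
    exists a, \top; do 2!split => //.
      by rewrite -Himp leIl.
  + move=> [hx hz] v /(Tprime_jf Himp) [b [[c [a [hc [ha hcab]]]] hb]].
    move/leX_sub: hx => hx; move/leX_sub: hz => hz.
    exists b; split => //.
    have [_ [uu um]] := proj2_sig u.
    apply: uu (um _ _ (hz c hc) (hx a ha)) _; by rewrite Himp.
Qed.
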